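(* Let $\mathbb H(t)=4\arctan(e^t)$. If $\Phi\in C^\infty(\mathbb{R}^2;\mathbb{C}^2)$ is parallel with respect to $(\mathbb H(x),i)$ and either $e^{-x/2}\Phi(x,y)\in L^\infty(\mathbb{R}^2)$ or $e^{x/2}\Phi(x,y)\in L^\infty(\mathbb{R}^2)$, then $\Phi$ is a constant complex multiple of a column of $\Phi^{\mathbb H}(x,y,i)$ (the two columns of $\Phi^{\mathbb H}(\cdot,\cdot,i)$ being linearly dependent).
   Context: Pauli matrices $\sigma_1=\begin{pmatrix}0&1\\1&0\end{pmatrix}$, $\sigma_2=\begin{pmatrix}0&-i\\ i&0\end{pmatrix}$, $\sigma_3=\begin{pmatrix}1&0\\0&-1\end{pmatrix}$; $K(\lambda)=\lambda-\lambda^{-1}$, $J(\lambda)=\lambda+\lambda^{-1}$. For $u\in C^\infty(\mathbb{R}^2)$, $\lambda\ne0$: $A=\frac i4\big((\lambda-\lambda^{-1}\cos u)\sigma_3-(\partial_xu-i\partial_yu)\sigma_2-\lambda^{-1}(\sin u)\sigma_1\big)$, $B=\frac14\big(-(\lambda+\lambda^{-1}\cos u)\sigma_3+(\partial_xu-i\partial_yu)\sigma_2-\lambda^{-1}(\sin u)\sigma_1\big)$; $\Phi$ is parallel with respect to $(u,\lambda)$ if $\partial_x\Phi=A\Phi$, $\partial_y\Phi=B\Phi$. $\Phi^0(x,y,\lambda)=\mathrm{diag}(e^{\frac i4K(\lambda)x-\frac14J(\lambda)y},e^{-\frac i4K(\lambda)x+\frac14J(\lambda)y})$ and, for $\lambda\ne0,-i$,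 $\Phi^{\mathbb H}=\Phi^0+\frac{i}{\lambda+i}\big((\tanh x)\sigma_3-(\operatorname{sech}x)\sigma_1-\mathrm{Id}\big)\Phi^0$. *)

(* Defs.v *)
From Stdlib Require Import Reals.
From Coquelicot Require Import Coquelicot.

Local Open Scope C_scope.

(* vectors of C^2 and 2x2 complex matrices (row major) *)
Definition cvec := (C * C)%type.
Definition cmat := ((C * C) * (C * C))%type.

Definition mk (a b c d : C) : cmat := ((a, b), (c, d)).
Definition madd (M N : cmat) : cmat :=
  let '((a, b), (c, d)) := M in let '((a', b'), (c', d')) := N in
  ((a + a', b + b'), (c + c', d + d')).
Definition msc (k : C) (M : cmat) : cmat :=
  let '((a, b), (c, d)) := M in ((k * a, k * b), (k * c, k * d)).
Definition mmul (M N : cmat) : cmat :=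
  let '((a, b), (c, d)) := M in let '((a', b'), (c', d')) := N in
  ((a * a' + b * c', a * b' + b * d'), (c * a' + d * c', c * b' + d * d')).
Definition mv (M : cmat) (v : cvec) : cvec :=
  let '((a, b), (c, d)) := M in (a * fst v + b * snd v, c * fst v + d * snd v).
Definition vsc (k : C) (v : cvec) : cvec := (k * fst v, k * snd v).
Definition vadd (v w : cvec) : cvec := (fst v + fst w, snd v + snd w).
(* column j of M : false = first column, true = second column *)
Definition col (j : bool) (M : cmat) : cvec :=
  let '((a, b), (c, d)) := M in if j then (b, d) else (a, c).

Definition sigma1 : cmat := mk 0 1 1 0.
Definition sigma2 : cmat := mk 0 (- Ci) Ci 0.
Definition sigma3 : cmat := mk 1 0 0 (-1).
Definition Id2 : cmat := mk 1 0 0 1.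

Definition Kf (l : C) : C := l - / l.
Definition Jf (l : C) : C := l + / l.

Definition Cexp (z : C) : C :=
  (exp (Re z) * cos (Im z), exp (Re z) * sin (Im z))%R.

Definition tanh (x : R) : R := ((exp x - exp (- x)) / (exp x + exp (- x)))%R.
Definition sech (x : R) : R := (2 / (exp x + exp (- x)))%R.

Definition dx (u : R -> R -> R) (x y : R) : R := Derive (fun t => u t y) x.
Definition dy (u : R -> R -> R) (x y : R) : R := Derive (fun t => u x t) y.

Definition Amat (u : R -> R -> R) (l : C) (x y : R) : cmat :=
  msc (Ci / 4)
    (madd (msc (l - / l * RtoC (cos (u x y))) sigma3)
    (madd (msc (- (RtoC (dx u x y) - Ci * RtoC (dy u x y))) sigma2)
          (msc (- (/ l * RtoC (sin (u x y)))) sigma1))).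

Definition Bmat (u : R -> R -> R) (l : C) (x y : R) : cmat :=
  msc (/ 4)
    (madd (msc (- (l + / l * RtoC (cos (u x y)))) sigma3)
    (madd (msc (RtoC (dx u x y) - Ci * RtoC (dy u x y)) sigma2)
          (msc (- (/ l * RtoC (sin (u x y)))) sigma1))).

Definition parallel (u : R -> R -> R) (l : C) (Phi : R -> R -> cvec) : Prop :=
  forall x y : R,
    is_derive (fun t => Phi t y) x (mv (Amat u l x y) (Phi x y)) /\
    is_derive (fun t => Phi x t) y (mv (Bmat u l x y) (Phi x y)).

Definition Phi0 (l : C) (x y : R) : cmat :=
  mk (Cexp (Ci / 4 * Kf l * RtoC x - / 4 * Jf l * RtoC y)) 0
     0 (Cexp (- (Ci / 4) * Kf l * RtoC x + / 4 * Jf l * RtoC y)).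

Definition PhiH (l : C) (x y : R) : cmat :=
  madd (Phi0 l x y)
       (mmul (msc (Ci / (l + Ci))
                  (madd (msc (RtoC (tanh x)) sigma3)
                  (madd (msc (- RtoC (sech x)) sigma1) (msc (-1) Id2))))
             (Phi0 l x y)).

Definition Hk (t : R) : R := (4 * atan (exp t))%R.

Fixpoint Ck (k : nat) (f : R -> R -> C) : Prop :=
  match k with
  | O => forall p : R * R, continuous (fun q : R * R => f (fst q) (snd q)) p
  | S k' => exists fx fy : R -> R -> C,
      (forall x y, is_derive (fun t => f t y) x (fx x y)) /\
      (forall x y, is_derive (fun t => f x t) y (fy x y)) /\
      Ck k' fx /\ Ck k' fy
  end.
Definition smooth (f : R -> R -> C) : Prop := forall k, Ck k f.
Definition smooth2 (Phi : R -> R -> cvec) : Prop :=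
  smooth (fun x y => fst (Phi x y)) /\ smooth (fun x y => snd (Phi x y)).

Definition Linf2 (g : R -> R -> cvec) : Prop :=
  exists M : R, forall x y : R,
    (Cmod (fst (g x y)) <= M /\ Cmod (snd (g x y)) <= M)%R.

(* Main.v *)
Require Import Defs.
From Stdlib Require Import Reals Lra.
From Coquelicot Require Import Coquelicot.

Notation CR := (prod_NormedModule R_AbsRing R_NormedModule R_NormedModule).
Notation CC := (prod_NormedModule R_AbsRing CR CR).

Lemma derive_lin {V W : NormedModule R_AbsRing} (L : V -> W) (f : R -> V) x d :
  is_linear L -> is_derive f x d -> is_derive (fun t => L (f t)) x (L d).
Proof.
  intros HL Hf. unfold is_derive in *.
  apply (filterdiff_ext_lin (U:=AbsRing_NormedModule R_AbsRing) _ (fun y : R => L (scal y d))).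
  - apply (filterdiff_comp' f L x (fun y => scal y d) L Hf). apply filterdiff_linear; exact HL.
  - intros y; simpl. exact (linear_scal (K:=R_AbsRing) L HL y d).
Qed.

Lemma lin_add {U V : NormedModule R_AbsRing} (f g : U -> V) :
  is_linear f -> is_linear g -> is_linear (fun x => plus (f x) (g x)).
Proof.
  intros Hf Hg. apply (is_linear_comp (fun x => (f x, g x)) (fun p : V * V => plus (fst p) (snd p))).
  apply is_linear_prod; auto. apply is_linear_plus.
Qed.

Lemma lin_scal {U : NormedModule R_AbsRing} (f : U -> R_NormedModule) (k : R) :
  is_linear f -> is_linear (fun x => k * f x).
Proof.
  intros Hf. apply (is_linear_comp f (fun z : R_NormedModule => scal k z)); auto.
  apply (is_linear_scal_r (K:=R_AbsRing) (V:=R_NormedModule) k). intros; apply Rmult_comm.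
Qed.

Lemma lin4 (k1 k2 k3 k4 : R) :
  is_linear (U:=CC) (V:=R_NormedModule)
    (fun v => k1 * fst (fst v) + k2 * snd (fst v) + k3 * fst (snd v) + k4 * snd (snd v)).
Proof.
  repeat apply (lin_add (U:=CC) (V:=R_NormedModule)); apply lin_scal.
  - apply (is_linear_comp (fun v : CC => fst v) (fun z : CR => fst z)); apply is_linear_fst.
  - apply (is_linear_comp (fun v : CC => fst v) (fun z : CR => snd z)); [apply is_linear_fst|apply is_linear_snd].
  - apply (is_linear_comp (fun v : CC => snd v) (fun z : CR => fst z)); [apply is_linear_snd|apply is_linear_fst].
  - apply (is_linear_comp (fun v : CC => snd v) (fun z : CR => snd z)); apply is_linear_snd.
Qed.

Lemma lin_comb (a b : C) :
  is_linear (U:=CC) (V:=CR) (fun v => (a * fst v + b * snd v)%C).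
Proof.
  eapply is_linear_ext; [|apply is_linear_prod; [apply (lin4 (fst a) (- snd a) (fst b) (- snd b)) | apply (lin4 (snd a) (fst a) (snd b) (fst b))]].
  intros [[v1 v2] [v3 v4]]. destruct a as [a1 a2], b as [b1 b2].
  unfold Cplus, Cmult; simpl. f_equal; ring.
Qed.

Lemma derive_comb (a b : C) (f : R -> C * C) x d :
  is_derive (V:=CC) f x d ->
  is_derive (V:=CR) (fun t => (a * fst (f t) + b * snd (f t))%C) x (a * fst d + b * snd d)%C.
Proof.
  intros H. exact (derive_lin (V:=CC) (W:=CR) _ f x d (lin_comb a b) H).
Qed.

Lemma cs2atan (t : R) : cos (2 * atan t) = (1 - t*t)/(1+t*t) /\ sin (2 * atan t) = 2*t/(1+t*t).
Proof.
  rewrite cos_2a, sin_2a, cos_atan, sin_atan.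
  assert (Hp : 0 < 1 + t²) by (unfold Rsqr; nra).
  assert (Hs := sqrt_lt_R0 _ Hp).
  assert (Hss := sqrt_sqrt _ (Rlt_le _ _ Hp)).
  unfold Rsqr in *. set (s := sqrt (1+t*t)) in *. replace (1/s*(1/s)) with (/(s*s)) by (field; lra). replace (t/s*(t/s)) with (t*t/(s*s)) by (field; lra). replace (2*(t/s)*(1/s)) with (2*t/(s*s)) by (field; lra). rewrite Hss. split; field; lra.
Qed.

Lemma cs4atan (t : R) : cos (4 * atan t) = ((1-t*t)*(1-t*t) - 4*t*t)/((1+t*t)*(1+t*t))
  /\ sin (4 * atan t) = 4*t*(1-t*t)/((1+t*t)*(1+t*t)).
Proof.
  replace (4 * atan t) with (2 * (2 * atan t)) by ring.
  rewrite (cos_2a (2 * atan t)), (sin_2a (2*atan t)). destruct (cs2atan t) as [H1 H2]. rewrite H1, H2.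
  assert (Hp : 0 < 1 + t*t) by nra.
  split; field; lra.
Qed.

Lemma dHk (x : R) : Derive Hk x = 4 * exp x / (1 + exp x * exp x).
Proof.
  apply is_derive_unique. unfold Hk. auto_derive; auto.
  field. assert (0 < exp x) by apply exp_pos. nra.
Qed.

Definition uH : R -> R -> R := fun x _ => Hk x.

Lemma dx_uH x y : dx uH x y = 4 * exp x / (1 + exp x * exp x).
Proof. unfold dx, uH. rewrite <- dHk. reflexivity. Qed.
Lemma dy_uH x y : dy uH x y = 0.
Proof. unfold dy, uH. apply Derive_const. Qed.

Ltac Csplit := apply injective_projections; simpl; repeat (unfold zero, one, plus, opp, minus, scal; simpl); repeat (unfold mult, prod_scal, prod_plus, prod_opp, prod_zero; simpl).

Lemma Bform x y (v : C * C) :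
  let t := exp x in
  let k : C := (0, 2 * t / ((1 + t*t)*(1+t*t)))%R in
  let w := (fst v + RtoC t * snd v)%C in
  mv (Bmat uH Ci x y) v = (k * RtoC (- t) * w, k * w)%C.
Proof.
  intros t k w. unfold Bmat. rewrite dx_uH, dy_uH. unfold uH.
  destruct (cs4atan (exp x)) as [Hc Hs]. unfold Hk. rewrite Hc, Hs.
  fold t. subst k w. destruct v as [[a b] [c d]].
  assert (Ht : 0 < t) by apply exp_pos.
  assert (Hp : 0 < 1 + t*t) by nra.
  unfold mv, msc, madd, sigma1, sigma2, sigma3, mk. simpl.
  f_equal; Csplit; field; lra.
Qed.

Lemma Aform2 x y (v : C * C) :
  let t := exp x in
  snd (mv (Amat uH Ci x y) v) = (RtoC (2*t*t*t/((1+t*t)*(1+t*t))) * fst v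
     + RtoC ((t*t-1)*(t*t-1)/(2*((1+t*t)*(1+t*t)))) * snd v)%C.
Proof.
  intros t. unfold Amat. rewrite dx_uH, dy_uH. unfold uH.
  destruct (cs4atan (exp x)) as [Hc Hs]. unfold Hk. rewrite Hc, Hs.
  fold t. destruct v as [[a b] [c d]].
  assert (Ht : 0 < t) by apply exp_pos.
  assert (Hp : 0 < 1 + t*t) by nra.
  unfold mv, msc, madd, sigma1, sigma2, sigma3, mk. simpl.
  Csplit; field; lra.
Qed.
Lemma Cexp_R r : Cexp (RtoC r) = RtoC (exp r).
Proof. unfold Cexp. simpl. rewrite cos_0, sin_0. Csplit; ring. Qed.

Lemma Phi0_i x y : Phi0 Ci x y = mk (RtoC (exp (- x / 2))) 0 0 (RtoC (exp (x/2))).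
Proof.
  unfold Phi0. f_equal; [f_equal|f_equal].
  - replace (Ci / 4 * Kf Ci * RtoC x - / 4 * Jf Ci * RtoC y)%C with (RtoC (- x / 2)).
    apply Cexp_R. unfold Kf, Jf. Csplit; field.
  - replace (- (Ci / 4) * Kf Ci * RtoC x + / 4 * Jf Ci * RtoC y)%C with (RtoC (x / 2)).
    apply Cexp_R. unfold Kf, Jf. Csplit; field.
Qed.

Lemma PhiH_cols x y :
  let a := exp (x/2) in
  col false (PhiH Ci x y) = (RtoC (a/(a*a + /(a*a))), RtoC (-(/a)/(a*a+/(a*a)))) /\
  col true (PhiH Ci x y) = (RtoC (-a/(a*a + /(a*a))), RtoC ((/a)/(a*a+/(a*a)))).
Proof.
  intros a. unfold PhiH. rewrite Phi0_i.
  assert (Ha : 0 < a) by apply exp_pos.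
  assert (E1 : exp (- x / 2) = / a) by (unfold a; rewrite <- exp_Ropp; f_equal; field).
  assert (E2 : exp x = a * a) by (unfold a; rewrite <- exp_plus; f_equal; field).
  assert (E3 : exp (- x) = / (a * a)) by (rewrite <- E2, <- exp_Ropp; reflexivity).
  rewrite E1. fold a. unfold Defs.tanh, Defs.sech. rewrite E2, E3.
  assert (Hq : 0 < a * a) by nra.
  assert (Hs : 0 < a * a + / (a*a)) by (assert (0 < /(a*a)) by (apply Rinv_0_lt_compat; lra); lra).
  unfold mmul, madd, msc, sigma1, sigma3, Id2, mk, col. simpl.
  split; f_equal; Csplit.
all: field.
all: split; [lra | nra].
Qed.

Lemma deriv_eq {V : NormedModule R_AbsRing} (f : R -> V) x d d' :
  is_derive f x d -> d = d' -> is_derive f x d'.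
Proof. intros H ->; exact H. Qed.

Lemma const_of_deriv {V : NormedModule R_AbsRing} (f : R -> V) :
  (forall t, is_derive f t zero) -> forall a b, f a = f b.
Proof.
  intros H a b. destruct (Rtotal_order a b) as [h|[h|h]].
  - apply eq_is_derive; auto.
  - subst; reflexivity.
  - symmetry; apply eq_is_derive; auto.
Qed.

Lemma derive_snd (f : R -> C * C) x d :
  is_derive (V:=CC) f x d -> is_derive (V:=CR) (fun t => snd (f t)) x (snd d).
Proof.
  intros H. exact (derive_lin (V:=CC) (W:=CR) (fun v => snd v) f x d is_linear_snd H).
Qed.

Lemma derive_scal_prod (f : R -> R) (h : R -> C) x df dh :
  is_derive f x df -> is_derive (V:=CR) h x dh ->
  is_derive (V:=CR) (fun t => scal (f t) (h t)) x (plus (scal df (h x)) (scal (f x) dh)).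
Proof.
  intros Hf Hh. unfold is_derive in *.
  eapply filterdiff_ext_lin.
  - apply (filterdiff_scal_fct (K:=R_AbsRing) (U:=AbsRing_NormedModule R_AbsRing) (V:=CR) x f h); auto.
    intros; apply Rmult_comm. exact Hf. exact Hh.
  - intros y. destruct (h x) as [h1 h2]. destruct dh as [d1 d2].
    unfold scal, plus; simpl. unfold prod_scal, prod_plus, scal, plus; simpl.
    unfold mult; simpl. f_equal; ring.
Qed.

Lemma scal_C (r : R) (z : C) : @scal R_Ring CR r z = (RtoC r * z)%C.
Proof. destruct z as [z1 z2]. unfold scal; simpl. unfold prod_scal, scal; simpl. unfold mult; simpl. Csplit; ring. Qed.

Theorem corollary3p9 (Phi : R -> R -> C * C) :
  smooth2 Phi ->
  parallel (fun x _ => Hk x) Ci Phi ->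
  (Linf2 (fun x y => vsc (RtoC (exp (- x / 2))) (Phi x y)) \/
   Linf2 (fun x y => vsc (RtoC (exp (x / 2))) (Phi x y))) ->
  (exists (c : C) (j : bool), forall x y : R,
      Phi x y = vsc c (col j (PhiH Ci x y))) /\
  (exists a b : C, (a, b) <> (RtoC 0, RtoC 0) /\ forall x y : R,
      vadd (vsc a (col false (PhiH Ci x y))) (vsc b (col true (PhiH Ci x y)))
      = (RtoC 0, RtoC 0)).
Proof.
  intros _ Hpar Hbd.
  change (parallel uH Ci Phi) in Hpar.
  assert (HB : forall x, exists M, forall y, Cmod (snd (Phi x y)) <= M).
  { intros x. destruct Hbd as [[M HM]|[M HM]].
    - exists (M / exp (- x / 2)). intros y. destruct (HM x y) as [_ H2].
      simpl in H2. rewrite Cmod_mult, Cmod_R, Rabs_pos_eq in H2 by (apply Rlt_le, exp_pos).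
      assert (0 < exp (- x / 2)) by apply exp_pos.
      apply (Rmult_le_reg_l (exp (- x / 2))); auto. field_simplify; lra.
    - exists (M / exp (x / 2)). intros y. destruct (HM x y) as [_ H2].
      simpl in H2. rewrite Cmod_mult, Cmod_R, Rabs_pos_eq in H2 by (apply Rlt_le, exp_pos).
      assert (0 < exp (x / 2)) by apply exp_pos.
      apply (Rmult_le_reg_l (exp (x / 2))); auto. field_simplify; lra. }
  assert (S1 : forall x y, fst (Phi x y) = (- RtoC (exp x) * snd (Phi x y))%C
                       /\ snd (Phi x y) = snd (Phi x 0)).
  { intros x.
    set (t := exp x).
    set (k := (0, 2 * t / ((1 + t*t)*(1+t*t)))%R : C).
    set (W := fun s => (1 * fst (Phi x s) + RtoC t * snd (Phi x s))%C).
    assert (HW : forall s, is_derive (V:=CR) W s zero).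
    { intros s. eapply deriv_eq. apply derive_comb. apply (proj2 (Hpar x s)).
      rewrite Bform. simpl. fold t. Csplit; ring. }
    assert (HWc : forall s, W s = W 0) by (intros; apply const_of_deriv; auto).
    set (K := (k * W 0)%C).
    set (g := fun s => minus (snd (Phi x s) : CR) (scal s K)).
    assert (Hg : forall s, is_derive (V:=CR) g s zero).
    { intros s. eapply deriv_eq. apply is_derive_minus.
      apply derive_snd. apply (proj2 (Hpar x s)).
      apply (is_derive_scal_l (V:=CR) (fun s => s)). apply (is_derive_id (K:=R_AbsRing)).
      rewrite Bform. simpl. fold t. fold k.
      replace (fst (Phi x s) + RtoC t * snd (Phi x s))%C with (W s) by (unfold W; Csplit; ring).
      rewrite HWc. unfold K. Csplit; ring. }
    assert (Hgc : forall s, g s = g 0) by (intros; apply const_of_deriv; auto).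
    assert (HK : K = RtoC 0).
    { destruct (HB x) as [M HM].
      assert (HM0 : 0 <= M) by (eapply Rle_trans; [apply Cmod_ge_0|apply (HM 0)]).
      destruct (Req_dec (Cmod K) 0) as [h|h]. apply Cmod_eq_0; auto.
      assert (hK : 0 < Cmod K) by (pose proof (Cmod_ge_0 K); lra).
      exfalso. set (y0 := (2*M+1)/Cmod K).
      assert (Hy0 : 0 <= y0) by (unfold y0; apply Rle_mult_inv_pos; lra).
      assert (E : (RtoC y0 * K)%C = (snd (Phi x y0) + - snd (Phi x 0))%C).
      { pose proof (Hgc y0) as E. unfold g in E. rewrite !scal_C in E.
        revert E. destruct (snd (Phi x y0)) as [p q], (snd (Phi x 0)) as [p' q'], K as [k1 k2].
        intros E. injection E. intros E2 E1. Csplit; repeat (unfold zero, one, plus, opp, minus, scal, mult in E1, E2; simpl in E1, E2); lra. }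
      assert (E' := f_equal Cmod E). rewrite Cmod_mult, Cmod_R, Rabs_pos_eq in E' by auto.
      pose proof (Cmod_triangle (snd (Phi x y0)) (- snd (Phi x 0))) as T.
      rewrite Cmod_opp in T. pose proof (HM y0). pose proof (HM 0).
      assert (y0 * Cmod K = 2*M+1) by (unfold y0; field; lra). lra. }
    assert (HW0 : W 0 = RtoC 0).
    { assert (hk : k <> RtoC 0).
      { intros e. injection e. intros e2. assert (0 < t) by apply exp_pos.
        assert (0 < (1 + t*t)*(1+t*t)) by nra.
        assert (0 < 2*t/((1+t*t)*(1+t*t))) by (apply Rdiv_lt_0_compat; nra). lra. }
      rewrite <- (Cmult_1_l (W 0)), <- (Cinv_l k hk), <- Cmult_assoc. fold K. rewrite HK.
      apply Cmult_0_r. }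
    intros y. split.
    - pose proof (HWc y) as e. rewrite HW0 in e. unfold W in e. revert e.
      destruct (fst (Phi x y)) as [p q], (snd (Phi x y)) as [p' q'].
      intros e. injection e. intros e2 e1. Csplit; repeat (unfold zero, one, plus, opp, minus, scal, mult in e1, e2; simpl in e1, e2); lra.
    - pose proof (Hgc y) as e. unfold g in e. rewrite HK in e. revert e.
      destruct (snd (Phi x y)) as [p q], (snd (Phi x 0)) as [p' q'].
      intros e. injection e. intros e2 e1. Csplit; repeat (unfold zero, one, plus, opp, minus, scal, mult in e1, e2; simpl in e1, e2); lra. }
  set (gf := fun x => - (exp (3*x/2) + exp (- x / 2))).
  assert (Hgf : forall x, gf x < 0).
  { intros x. unfold gf. pose proof (exp_pos (3*x/2)). pose proof (exp_pos (-x/2)). lra. }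
  set (c := fun x => @scal R_Ring CR (gf x) (snd (Phi x 0))).
  assert (Hc : forall x, is_derive (V:=CR) c x zero).
  { intros x. change R in x. eapply deriv_eq.
    apply (derive_scal_prod gf (fun x => snd (Phi x 0)) x
             (-(3/2*exp(3*x/2) - /2 * exp(-x/2))) (snd (mv (Amat uH Ci x 0) (Phi x 0)))).
    - unfold gf. auto_derive; [auto | unfold Rdiv; ring].
    - apply derive_snd. apply (proj1 (Hpar x 0)).
    - rewrite Aform2. destruct (S1 x 0) as [H1 _]. rewrite H1. unfold gf.
      set (a := exp (x/2)).
      assert (Ha : 0 < a) by apply exp_pos.
      assert (E1 : exp (- x / 2) = / a) by (unfold a; rewrite <- exp_Ropp; f_equal; field).
      assert (E2 : exp x = a * a) by (unfold a; rewrite <- exp_plus; f_equal; field).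
      assert (E3 : exp (3 * x / 2) = a * a * a) by (unfold a; rewrite <- !exp_plus; f_equal; field).
      rewrite E1, E2, E3. destruct (snd (Phi x 0)) as [p q].
      assert (0 < a * a) by nra.
      Csplit; field; nra. }
  assert (Hcc : forall x, c x = c 0) by (intros; apply const_of_deriv; auto).
  set (C0 := c 0) in Hcc.
  assert (Ep : forall x, snd (Phi x 0) = (RtoC (/ gf x) * C0)%C).
  { intros x. rewrite <- (Hcc x). unfold c. rewrite scal_C. specialize (Hgf x).
    destruct (snd (Phi x 0)) as [p q]. Csplit; field; lra. }
  split.
  - exists C0, false. intros x y. destruct (PhiH_cols x y) as [Hc1 _]. rewrite Hc1.
    destruct (S1 x y) as [E1' E2']. specialize (Hgf x).
    rewrite (surjective_pairing (Phi x y)), E1', E2', Ep.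
    unfold gf in *.
    set (a := exp (x/2)) in *.
    assert (Ha : 0 < a) by apply exp_pos.
    assert (E1 : exp (- x / 2) = / a) by (unfold a; rewrite <- exp_Ropp; f_equal; field).
    assert (E2 : exp x = a * a) by (unfold a; rewrite <- exp_plus; f_equal; field).
    assert (E3 : exp (3 * x / 2) = a * a * a) by (unfold a; rewrite <- !exp_plus; f_equal; field).
    rewrite E1, E2, E3. destruct C0 as [p q].
    assert (0 < a * a) by nra.
    assert (0 < /(a * a)) by (apply Rinv_0_lt_compat; lra).
    unfold vsc; simpl. f_equal; Csplit; field; repeat split; nra.
  - exists (RtoC 1), (RtoC 1). split.
    + intros e. injection e. intros. lra.
    + intros x y. destruct (PhiH_cols x y) as [Hc1 Hc2]. rewrite Hc1, Hc2.
      set (a := exp (x/2)).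
      assert (Ha : 0 < a) by apply exp_pos.
      assert (0 < a * a) by nra.
      assert (0 < /(a * a)) by (apply Rinv_0_lt_compat; lra).
      unfold vadd, vsc; simpl. f_equal; Csplit; field; split; nra.
Qed.
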